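(* Let $M$ be a total deterministic 2-copy tree-to-word transducer with output alphabet $B$ whose axiom is $q_1(x_1)q_2(x_1)$ for states $q_1,q_2$. Then $M$ is balanced (i.e. $\mathcal{L}(M)=\{\varepsilon\}$) if and only if both of the following hold: (1) $\mathcal{L}(q_1)\subseteq A^*$ and $\overline{\mathcal{L}(q_2)}\subseteq A^*$; (2) $q_1$ and $\bar q_2$ are equivalent, i.e. $[\![q_1]\!](t)=[\![\bar q_2]\!](t)$ for all $t\in\mathcal{T}_\Sigma$.
   Context: Let $A$ be a finite alphabet of opening brackets, $\bar A=\{\bar a\mid a\in A\}$ a disjoint copy of closing brackets, and $B=A\cup\bar A$. Extend $\bar{\cdot}$ to an involution on $B^*$ by $\bar\varepsilon=\varepsilon$, $\bar{\bar a}=a$, $\overline{\alpha\beta}=\bar\beta\,\bar\alpha$, and to languages elementwise. The reduction relation on $B^*$ is $\alpha a\bar a\beta\to\alpha\beta$ for $a\in A$ (only $a\bar a$ cancels, not $\bar a a$); $\rho(\alpha)$ denotes the unique irreducible normal form. Let $\Sigma$ be a finite ranked input alphabet and $\mathcal{T}_\Sigma$ the trees over $\Sigma$. A total deterministic 2-copy tree-to-word transducer has a finite set $Q$ of states and, for every $q\in Q$ and $f\in\Sigma$ of rank $m$, exactly one rule $q(f(x_1,\dots,x_m))\to u_0q_1'(x_{\sigma(1)})u_1\cdots q_n'(x_{\sigma(n)})u_n$ with $q_i'\in Q$, $u_i\in B^*$, $n\le m$, $\sigma$ injective. State semantics: $[\![q]\!](f(t_1,\dots,t_m))=\rho(u_0[\![q_1']\!](t_{\sigma(1)})u_1\cdots[\![q_n']\!](t_{\sigma(n)})u_n)$,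 and $\mathcal{L}(q)=\{[\![q]\!](t)\mid t\in\mathcal{T}_\Sigma\}$. With axiom $q_1(x_1)q_2(x_1)$, $[\![M]\!](t)=\rho([\![q_1]\!](t)[\![q_2]\!](t))$ and $\mathcal{L}(M)=\{[\![M]\!](t)\mid t\in\mathcal T_\Sigma\}$. For a state $q$, $\bar q$ denotes the inverse transduction, obtained from a copy of the rules reachable from $q$ by applying the involution to each right-hand side, so that $[\![\bar q]\!](t)=\overline{[\![q]\!](t)}$ for all $t$. *)

(* Defs.v *)
From mathcomp Require Import all_boot.
Set Implicit Arguments. Unset Strict Implicit. Unset Printing Implicit Defensive.

(* B = A ∪ Ā : [Op a] is the opening bracket a, [Cl a] the closing bracket ā. *)
Inductive letter (A : Type) := Op of A | Cl of A.
Arguments Op {A} _. Arguments Cl {A} _.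

Definition word (A : Type) := seq (letter A).

Definition is_open (A : Type) (x : letter A) : bool :=
  if x is Op _ then true else false.

Definition bar_letter (A : Type) (x : letter A) : letter A :=
  match x with Op a => Cl a | Cl a => Op a end.
Definition bar (A : Type) (w : word A) : word A := rev (map (@bar_letter A) w).

Inductive red_step (A : Type) : word A -> word A -> Prop :=
  | RedStep (al be : word A) (a : A) : red_step (al ++ [:: Op a; Cl a] ++ be) (al ++ be).

Fixpoint rho_aux (A : eqType) (stk w : word A) : word A :=
  match w with
  | [::] => rev stk
  | x :: w' =>
      match x, stk with
      | Cl b, Op a :: stk' => if a == b then rho_aux stk' w' else rho_aux (x :: stk) w'
      | _, _ => rho_aux (x :: stk) w'
      end
  end.
Definition rho (A : eqType) (w : word A) : word A := rho_aux [::] w.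

Inductive tree (S : Type) := Node of S & seq (tree S).
Arguments Node {S} _ _.

Fixpoint well_ranked (S : Type) (rank : S -> nat) (t : tree S) : bool :=
  match t with Node f ts => (size ts == rank f) && all (well_ranked rank) ts end.

(* A right-hand side  u0 q1'(x_{σ(1)}) u1 ... qn'(x_{σ(n)}) un  is represented by
   (u0, [:: (q1', σ(1)-1, u1); ...; (qn', σ(n)-1, un)])  (variable indices 0-based). *)
Definition rhs (A Q : Type) := (word A * seq (Q * nat * word A))%type.

Record transducer (A S Q : finType) (rank : S -> nat) := Transducer {
  rule : Q -> S -> rhs A Q;
  rule_wf : forall q f,
     all (fun it : Q * nat * word A => it.1.2 < rank f) (rule q f).2 /\
     uniq (map (fun it : Q * nat * word A => it.1.2) (rule q f).2)
}.

Section Sem.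
Variables (A S Q : finType) (R : Q -> S -> rhs A Q).

Fixpoint sem_all (t : tree S) : Q -> word A :=
  match t with
  | Node f ts =>
      let child := map sem_all ts in
      fun q =>
        let r := R q f in
        rho (r.1 ++ flatten
               (map (fun it : Q * nat * word A =>
                       nth (fun _ => [::]) child it.1.2 it.1.1 ++ it.2) r.2))
  end.
End Sem.

Definition sem (A S Q : finType) (rank : S -> nat) (M : transducer A Q rank)
  (q : Q) (t : tree S) : word A := sem_all (rule M) t q.

(* the inverse rules: bar of each right-hand side,
   bar(u0 q1 u1 ... qn un) = bar un  q̄n  bar u(n-1) ... q̄1 bar u0 *)
Definition bar_rhs (A Q : Type) (r : rhs A Q) : rhs A Q :=
  let us := map (fun it : Q * nat * word A => it.2) r.2 in
  let qs := map (fun it : Q * nat * word A => it.1) r.2 in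
  (bar (last r.1 us), rev (zip qs (map (@bar A) (belast r.1 us)))).

Definition sem_bar (A S Q : finType) (rank : S -> nat) (M : transducer A Q rank)
  (q : Q) (t : tree S) : word A := sem_all (fun q f => bar_rhs (rule M q f)) t q.

Definition sem_M (A S Q : finType) (rank : S -> nat) (M : transducer A Q rank)
  (q1 q2 : Q) (t : tree S) : word A := rho (sem M q1 t ++ sem M q2 t).

Definition balanced (A S Q : finType) (rank : S -> nat) (M : transducer A Q rank)
  (q1 q2 : Q) : Prop :=
  (forall t, well_ranked rank t -> sem_M M q1 q2 t = [::]) /\
  (exists t, well_ranked rank t).

(* Main.v *)
Require Import Defs.
From mathcomp Require Import all_boot.
Set Implicit Arguments. Unset Strict Implicit. Unset Printing Implicit Defensive.

Section Words.
Variable A : eqType.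
Implicit Types (s w u v : word A) (x y : letter A).

Definition push s x : word A :=
  match x, s with
  | Cl b, Op a :: s' => if a == b then s' else x :: s
  | _, _ => x :: s
  end.
Definition NF w := foldl push [::] w.

Lemma rho_auxE s w : rho_aux s w = rev (foldl push s w).
Proof. elim: w s => [//|x w IH] s /=; case: x => [a|b]; case: s => [|[a'|a'] s] //=;
  by case: ifP. Qed.

Lemma rhoE w : rho w = rev (NF w).
Proof. exact: rho_auxE. Qed.

Lemma push_op s a : push s (Op a) = Op a :: s. Proof. by []. Qed.
Lemma push_nil x : push [::] x = [:: x]. Proof. by case: x. Qed.
Lemma push_cl s a b : push (Cl a :: s) (Cl b) = [:: Cl b, Cl a & s]. Proof. by []. Qed.
Lemma push_oc s a b : push (Op a :: s) (Cl b) = if a == b then s else [:: Cl b, Op a & s]. Proof. by []. Qed.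

Lemma push_rev s n x : foldl push s (rev (push n x)) = push (foldl push s (rev n)) x.
Proof.
case: x => [a|b]; first by rewrite push_op rev_cons foldl_rcons.
case: n => [|y n]; first by rewrite push_nil.
case: y => [a|a]; last by rewrite push_cl rev_cons foldl_rcons.
rewrite push_oc; case: ifP => [/eqP <-|_]; last by rewrite rev_cons foldl_rcons.
by rewrite rev_cons !foldl_rcons push_op push_oc eqxx.
Qed.

Lemma foldl_NF s (y : word A) : foldl push s (rev (NF y)) = foldl push s y.
Proof.
move: s; elim/last_ind: y => [//|y x IH] s.
by rewrite /NF !foldl_rcons push_rev IH.
Qed.

Lemma rho_idem w : rho (rho w) = rho w.
Proof. by rewrite !rhoE /NF foldl_NF. Qed.

Definition cancels x y := match x, y with Op a, Cl b => a == b | _, _ => false end.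
Definition ncancel x y := ~~ cancels x y.
Definition stk_ok s := sorted (fun y x => ncancel x y) s.

Lemma push_nc x s y : ~~ cancels x y -> push (x :: s) y = y :: x :: s.
Proof. by case: x; case: y => //= a b /negbTE ->. Qed.

Lemma push_ok s x : stk_ok s -> stk_ok (push s x).
Proof.
rewrite /stk_ok.
case: x => [a|b].
  case: s => [//|y s]; rewrite push_op /= => ->; rewrite andbT /ncancel; by case: y.
case: s => [//|[a|a] s].
  rewrite push_oc; case: ifP => [_ /path_sorted //|/negbT H p].
  by rewrite /= /ncancel /= H; exact: p.
by rewrite push_cl /= => ->.
Qed.

Lemma NF_ok w : stk_ok (NF w).
Proof. rewrite /NF; elim/last_ind: w => [//|w x IH]; rewrite foldl_rcons; exact: push_ok. Qed.

Lemma rho_irred w : sorted ncancel (rho w).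
Proof. by rewrite rhoE rev_sorted; exact: NF_ok. Qed.

Lemma foldl_irred r x s0 : path ncancel x r -> foldl push (x :: s0) r = rev r ++ x :: s0.
Proof.
elim: r x s0 => [//|y r IH] x s0 /= /andP [H1 H2].
by rewrite push_nc // IH // rev_cons cat_rcons.
Qed.

Lemma foldl_irred0 r : sorted ncancel r -> foldl push [::] r = rev r.
Proof. case: r => [//|y r] /= H. by rewrite push_nil foldl_irred // rev_cons cats1. Qed.

Definition bl := @bar_letter A.
Lemma blK : involutive bl. Proof. by case. Qed.

Lemma bar_cat u v : bar (u ++ v) = bar v ++ bar u.
Proof. by rewrite /bar map_cat rev_cat. Qed.
Lemma barK : involutive (@bar A).
Proof. move=> w; rewrite /bar map_rev revK -map_comp; rewrite -[RHS]map_id; apply: eq_map; exact: blK. Qed.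
Lemma bar_cons x w : bar (x :: w) = rcons (bar w) (bl x).
Proof. by rewrite /bar /= rev_cons. Qed.

Lemma NF_bar w : NF (bar w) = rev (map bl (NF w)).
Proof.
elim: w => [//|x w IH].
rewrite bar_cons /NF foldl_rcons -/(NF (bar w)) IH.
rewrite [foldl _ _ (x :: w)]/= push_nil -(foldl_NF [:: x] w) -[rev (map bl (NF w))]map_rev.
have := NF_ok w; rewrite /stk_ok -rev_sorted.
case: (rev (NF w)) => [|y r] /=; first by rewrite /push; case: x.
move=> Hp.
case Hc: (cancels x y).
  case: x Hc Hp => [a|a] //; case: y => [b|b] //= /eqP <- Hp.
  rewrite eqxx /= foldl_irred0; last exact: path_sorted Hp.
  by rewrite map_rev revK.
rewrite (push_nc [::] (negbT Hc)) foldl_irred //.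
have -> : rev r ++ [:: y; x] = rev [:: x, y & r] by rewrite !rev_cons -!cats1 -catA.
rewrite map_rev revK /=.
by case: x Hc {Hp} => [a|a]; case: y => [b|b] //= H; rewrite eq_sym H.
Qed.

Lemma rho_bar w : rho (bar w) = bar (rho w).
Proof. by rewrite !rhoE NF_bar /bar revK map_rev revK. Qed.

Lemma persist w s1 c s2 : exists s1', foldl push (s1 ++ Cl c :: s2) w = s1' ++ Cl c :: s2.
Proof.
elim: w s1 => [|x w IH] s1 /=; first by exists s1.
have [s1'' ->] : exists s1'', push (s1 ++ Cl c :: s2) x = s1'' ++ Cl c :: s2.
  case: s1 => [|y s1].
    by exists [:: x]; case: x.
  case: x => [a|b]; first by exists [:: Op a, y & s1].
  case: y => [a|a]; last by exists [:: Cl b, Cl a & s1].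
  rewrite cat_cons push_oc.
  case: ifP => _; [by exists s1 | by exists [:: Cl b, Op a & s1]].
exact: IH.
Qed.

Lemma rev_has_cl u : ~~ all (@is_open A) u -> exists s1 c s2, rev u = s1 ++ Cl c :: s2.
Proof.
elim: u => [//|x u IH] /=; rewrite rev_cons.
case: x => [a|c] /=.
  move=> /IH [s1 [c [s2 ->]]]; exists s1, c, (rcons s2 (Op a)); by rewrite rcons_cat.
by move=> _; exists (rev u), c, [::]; rewrite cats1.
Qed.

Lemma NF_nil w : rho w = [::] -> NF w = [::].
Proof. by rewrite rhoE => /(congr1 rev); rewrite revK. Qed.

Lemma NF_cat u v : rho u = u -> NF (u ++ v) = foldl push (rev u) v.
Proof. move=> Hu; by rewrite /NF foldl_cat -/(NF u) -{2}Hu rhoE revK. Qed.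

Lemma open_of_nil u v : rho u = u -> rho (u ++ v) = [::] -> all (@is_open A) u.
Proof.
move=> Hu /NF_nil; rewrite NF_cat //.
case Ho: (all (@is_open A) u) => //; move/negbT: Ho => /rev_has_cl [s1 [c [s2 ->]]].
by have [s1' ->] := persist v s1 c s2; case: s1'.
Qed.

Lemma foldl_open u s : all (@is_open A) u -> foldl push s u = rev u ++ s.
Proof.
elim: u s => [//|[a|a] u IH] s //= H. by rewrite IH // rev_cons cat_rcons.
Qed.

Lemma cancel_bar u s : all (@is_open A) u -> foldl push (rev u ++ s) (bar u) = s.
Proof.
elim: u s => [//|[a|a] u IH] s //= H.
by rewrite bar_cons foldl_rcons rev_cons cat_rcons IH //= eqxx.
Qed.

Lemma eq_of_cancel w u : all (@is_open A) u -> all (@is_open A) w ->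
  foldl push (rev u) (bar w) = [::] -> u = w.
Proof.
move: u; elim/last_ind: w => [|w x IH] u Hu.
  by move=> _ /= /(congr1 rev); rewrite revK.
rewrite all_rcons => /andP [Hx Hw].
case: x Hx => // b _.
rewrite /bar map_rcons rev_rcons -/(bar w) /=.
case/lastP: u Hu => [|u y].
  by move=> _; have [s1' ->] := persist (bar w) [::] b [::]; case: s1'.
rewrite all_rcons => /andP [Hy Hu]; case: y Hy => // a _.
rewrite rev_rcons /=; case: ifP => [/eqP -> H|_].
  by rewrite (IH u Hu Hw H).
have [s1' ->] := persist (bar w) [::] b [:: Op a & rev u]; by case: s1'.
Qed.

End Words.

Section Trees.
Variables (A S Q : finType).

Fixpoint tree_ind' (P : tree S -> Prop)
  (H : forall f ts, foldr (fun t acc => P t /\ acc) True ts -> P (Node f ts)) t : P t :=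
  match t with Node f ts => H f ts
    ((fix loop ts := match ts return foldr (fun t acc => P t /\ acc) True ts with
      | [::] => I | t :: ts' => conj (tree_ind' H t) (loop ts') end) ts) end.

Lemma bar_rhs_flat (r : rhs A Q) (h : Q * nat -> word A) :
  bar (r.1 ++ flatten (map (fun it : Q * nat * word A => h it.1 ++ it.2) r.2)) =
  (bar_rhs r).1 ++ flatten (map (fun it : Q * nat * word A => bar (h it.1) ++ it.2) (bar_rhs r).2).
Proof.
case: r => u0 items; rewrite /bar_rhs /=.
elim: items u0 => [|[x u1] items IH] u0 /=; first by rewrite !cats0.
rewrite rev_cons map_rcons flatten_rcons [in RHS]catA -IH !bar_cat /=.
by rewrite !catA.
Qed.

Lemma sem_all_bar (R : Q -> S -> rhs A Q) t q :
  sem_all (fun q f => bar_rhs (R q f)) t q = bar (sem_all R t q).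
Proof.
move: q; elim/tree_ind': t => f ts IH q /=.
rewrite -rho_bar (bar_rhs_flat _ (fun p => nth (fun _ => [::]) (map (sem_all R) ts) p.2 p.1)).
congr (rho (_ ++ flatten _)); apply: eq_map => it; congr (_ ++ _).
elim: ts IH (it.1.2) => [|t ts IHl] /=; first by move=> _ [|i].
move=> [H1 H2] [|i] //=. exact: IHl.
Qed.

End Trees.

Lemma sem_rho (A S Q : finType) (rank : S -> nat) (M : transducer A Q rank) q t :
  rho (sem M q t) = sem M q t.
Proof. case: t => f ts; rewrite /sem /=; exact: rho_idem. Qed.

Lemma sem_barE (A S Q : finType) (rank : S -> nat) (M : transducer A Q rank) q t :
  sem_bar M q t = bar (sem M q t).
Proof. exact: sem_all_bar. Qed.

Theorem proposition1 (A S Q : finType) (rank : S -> nat)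
  (M : transducer A Q rank) (q1 q2 : Q)
  (HSigma : exists t : tree S, well_ranked rank t) :
  balanced M q1 q2 <->
  ((forall t, well_ranked rank t -> all (@is_open A) (sem M q1 t)) /\
   (forall t, well_ranked rank t -> all (@is_open A) (bar (sem M q2 t)))) /\
  (forall t, well_ranked rank t -> sem M q1 t = sem_bar M q2 t).
Proof.
split.
  move=> [Hb _].
  have key : forall t, well_ranked rank t ->
    [/\ all (@is_open A) (sem M q1 t), all (@is_open A) (bar (sem M q2 t))
      & sem M q1 t = sem_bar M q2 t].
    move=> t wt; have H := Hb t wt; rewrite /sem_M in H.
    set u := sem M q1 t in H *; set v := sem M q2 t in H *.
    have Hu : rho u = u by exact: sem_rho.
    have Hv : rho v = v by exact: sem_rho.
    have Ou : all (@is_open A) u by exact: open_of_nil Hu H.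
    have Ov : all (@is_open A) (bar v).
      apply: (@open_of_nil _ _ (bar u)); first by rewrite rho_bar Hv.
      by rewrite -bar_cat rho_bar H.
    split => //; rewrite sem_barE -/v.
    apply: eq_of_cancel => //; rewrite barK -NF_cat //; exact: NF_nil.
  split; first split; move=> t wt; by case: (key t wt).
move=> [[H1 H2] H3]; split => // t wt.
rewrite /sem_M.
have Hu := H1 t wt; have := H3 t wt; rewrite sem_barE => ->.
have Ow := H2 t wt; move: Ow.
set v := sem M q2 t; rewrite -[v in _ ++ v]barK rhoE.
set w := bar v => Ow.
by rewrite /NF foldl_cat (foldl_open [::] Ow) cancel_bar.
Qed.
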